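(* Let $0<\zeta\le1$, place a spike at the origin, and let $s^1,s^2,s^3$ be its three nearest samples for some sampling grid of spacing $\zeta$ (any relative position). Let $W^1,W^2$ be the corresponding wave functions. Then for $i=1,2$ and all $t\in\mathbb{R}^2$ with $\|t\|\ge10$, the absolute values of $W^i(t)$ and of each of its first and second partial derivatives at $t$ are bounded by $$g(t)=\frac{6\|t\|^2}{\zeta}\exp\!\Big(-\frac{\|t\|^2}{2}+\sqrt2\,\zeta\|t\|\Big),$$ and if moreover $10^{-2}\le\zeta\le1$ then $g(t)<2\cdot10^{-9}$ for all such $t$.
   Context: $K(t)=\exp(-\|t\|^2/2)$. The three nearest samples of a spike $t_0$: three vertices of a grid square of side $\zeta$ forming a right isosceles triangle with axis-parallel legs of length $\zeta$ that contains $t_0$. The waves of spike $t_0$ are the unique functions $W^i(u)=\kappa_iK(s^1-u)+\mu_iK(s^2-u)+\rho_iK(s^3-u)$ with $W^1(t_0)=0,\partial_xW^1(t_0)=1,\partial_yW^1(t_0)=0$ and $W^2(t_0)=0,\partial_xW^2(t_0)=0,\partial_yW^2(t_0)=1$; derivatives are with respect to $u$. *)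

(* Defs.v *)
From Stdlib Require Import Reals Lra.
Open Scope R_scope.

Definition K (x y : R) : R := exp (- (x ^ 2 + y ^ 2) / 2).

Definition norm2 (x y : R) : R := sqrt (x ^ 2 + y ^ 2).

(* Right isosceles triangle with right-angle vertex c, horizontal neighbour h
   and vertical neighbour v, legs of length z (three vertices of a grid square
   of side z). *)
Definition right_tri (z : R) (c h v : R * R) : Prop :=
  exists s1 s2 : R, (s1 = 1 \/ s1 = -1) /\ (s2 = 1 \/ s2 = -1) /\
    h = (fst c + s1 * z, snd c) /\ v = (fst c, snd c + s2 * z).

Definition in_triangle (p a b c : R * R) : Prop :=
  exists l1 l2 l3 : R, 0 <= l1 /\ 0 <= l2 /\ 0 <= l3 /\ l1 + l2 + l3 = 1 /\
    fst p = l1 * fst a + l2 * fst b + l3 * fst c /\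
    snd p = l1 * snd a + l2 * snd b + l3 * snd c.

Definition nearest_samples (z : R) (t0 s1 s2 s3 : R * R) : Prop :=
  (right_tri z s1 s2 s3 \/ right_tri z s1 s3 s2 \/ right_tri z s2 s1 s3 \/
   right_tri z s2 s3 s1 \/ right_tri z s3 s1 s2 \/ right_tri z s3 s2 s1) /\
  in_triangle t0 s1 s2 s3.

Definition wave (s1 s2 s3 : R * R) (a b c : R) (x y : R) : R :=
  a * K (fst s1 - x) (snd s1 - y) + b * K (fst s2 - x) (snd s2 - y)
  + c * K (fst s3 - x) (snd s3 - y).

Definition dx_is (f : R -> R -> R) (x y l : R) : Prop :=
  derivable_pt_lim (fun a => f a y) x l.
Definition dy_is (f : R -> R -> R) (x y l : R) : Prop :=
  derivable_pt_lim (fun b => f x b) y l.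

Definition wave_conds (f : R -> R -> R) (vx vy : R) : Prop :=
  f 0 0 = 0 /\ dx_is f 0 0 vx /\ dy_is f 0 0 vy.

Definition bounded_C2_at (f : R -> R -> R) (x y B : R) : Prop :=
  Rabs (f x y) <= B /\
  (forall l, dx_is f x y l -> Rabs l <= B) /\
  (forall l, dy_is f x y l -> Rabs l <= B) /\
  (forall D : R -> R -> R, (forall a b, dx_is f a b (D a b)) ->
     (forall l, dx_is D x y l -> Rabs l <= B) /\
     (forall l, dy_is D x y l -> Rabs l <= B)) /\
  (forall E : R -> R -> R, (forall a b, dy_is f a b (E a b)) ->
     (forall l, dx_is E x y l -> Rabs l <= B) /\
     (forall l, dy_is E x y l -> Rabs l <= B)).

Definition gbound (z x y : R) : R :=
  6 * (x ^ 2 + y ^ 2) / z *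
  exp (- (x ^ 2 + y ^ 2) / 2 + sqrt 2 * z * norm2 x y).

(* Main.v *)
Require Import Defs.
From Stdlib Require Import Reals Lra Psatz FunctionalExtensionality.
From Coquelicot Require Import Coquelicot.
Open Scope R_scope.

Definition Wx (s1 s2 s3 : R*R) (k m r x y : R) :=
  k * (fst s1 - x) * K (fst s1 - x) (snd s1 - y) +
  m * (fst s2 - x) * K (fst s2 - x) (snd s2 - y) +
  r * (fst s3 - x) * K (fst s3 - x) (snd s3 - y).
Definition Wy (s1 s2 s3 : R*R) (k m r x y : R) :=
  k * (snd s1 - y) * K (fst s1 - x) (snd s1 - y) +
  m * (snd s2 - y) * K (fst s2 - x) (snd s2 - y) +
  r * (snd s3 - y) * K (fst s3 - x) (snd s3 - y).
Definition Wxx (s1 s2 s3 : R*R) (k m r x y : R) :=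
  k * ((fst s1 - x)^2 - 1) * K (fst s1 - x) (snd s1 - y) +
  m * ((fst s2 - x)^2 - 1) * K (fst s2 - x) (snd s2 - y) +
  r * ((fst s3 - x)^2 - 1) * K (fst s3 - x) (snd s3 - y).
Definition Wyy (s1 s2 s3 : R*R) (k m r x y : R) :=
  k * ((snd s1 - y)^2 - 1) * K (fst s1 - x) (snd s1 - y) +
  m * ((snd s2 - y)^2 - 1) * K (fst s2 - x) (snd s2 - y) +
  r * ((snd s3 - y)^2 - 1) * K (fst s3 - x) (snd s3 - y).
Definition Wxy (s1 s2 s3 : R*R) (k m r x y : R) :=
  k * ((fst s1 - x) * (snd s1 - y)) * K (fst s1 - x) (snd s1 - y) +
  m * ((fst s2 - x) * (snd s2 - y)) * K (fst s2 - x) (snd s2 - y) +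
  r * ((fst s3 - x) * (snd s3 - y)) * K (fst s3 - x) (snd s3 - y).

Ltac expnorm := repeat match goal with |- context[exp ?a] => match goal with |- context [exp ?b] =>
  assert_fails (constr_eq a b); replace b with a by field end end.

Ltac dtac := unfold dx_is, dy_is; intros; apply is_derive_Reals;
  unfold wave, Wx, Wy, Wxx, Wyy, Wxy, K; auto_derive; [repeat split | expnorm; field].

Lemma d_W_x s1 s2 s3 k m r x y : dx_is (wave s1 s2 s3 k m r) x y (Wx s1 s2 s3 k m r x y).
Proof. dtac. Qed.
Lemma d_W_y s1 s2 s3 k m r x y : dy_is (wave s1 s2 s3 k m r) x y (Wy s1 s2 s3 k m r x y).
Proof. dtac. Qed.
Lemma d_Wx_x s1 s2 s3 k m r x y : dx_is (Wx s1 s2 s3 k m r) x y (Wxx s1 s2 s3 k m r x y).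
Proof. dtac. Qed.
Lemma d_Wx_y s1 s2 s3 k m r x y : dy_is (Wx s1 s2 s3 k m r) x y (Wxy s1 s2 s3 k m r x y).
Proof. dtac. Qed.
Lemma d_Wy_x s1 s2 s3 k m r x y : dx_is (Wy s1 s2 s3 k m r) x y (Wxy s1 s2 s3 k m r x y).
Proof. dtac. Qed.
Lemma d_Wy_y s1 s2 s3 k m r x y : dy_is (Wy s1 s2 s3 k m r) x y (Wyy s1 s2 s3 k m r x y).
Proof. dtac. Qed.


Lemma exp_le a b : a <= b -> exp a <= exp b.
Proof. intros H; destruct (Rle_lt_or_eq_dec _ _ H) as [H'|H'].
  - left; apply exp_increasing; exact H'.
  - subst; right; reflexivity. Qed.

Definition G z x y := exp (- (x^2+y^2)/2 + sqrt 2 * z * norm2 x y).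

Lemma K_shift a b x y : K (a - x) (b - y) = K a b * exp (-(x^2+y^2)/2 + (a*x + b*y)).
Proof. unfold K; rewrite <- exp_plus; f_equal; field. Qed.

Lemma norm2_sq x y : norm2 x y * norm2 x y = x^2+y^2.
Proof. unfold norm2; apply sqrt_sqrt; nra. Qed.

Lemma dot_le a b x y z : a^2+b^2 <= 2*z^2 -> 0 < z -> a*x+b*y <= sqrt 2 * z * norm2 x y.
Proof.
  intros H Hz.
  pose proof (norm2_sq x y) as Hn. pose proof (sqrt_pos (x^2+y^2)) as Hn0.
  fold (norm2 x y) in Hn0.
  pose proof (sqrt_sqrt 2 ltac:(lra)) as H2. pose proof (sqrt_pos 2) as H20.
  set (s := sqrt 2 * z * norm2 x y).
  assert (Hs0 : 0 <= s) by (unfold s; apply Rmult_le_pos; [apply Rmult_le_pos|]; lra).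
  assert (Hss : s * s = 2 * z^2 * (x^2+y^2)).
  { unfold s. replace (sqrt 2 * z * norm2 x y * (sqrt 2 * z * norm2 x y)) with
      ((sqrt 2 * sqrt 2) * z^2 * (norm2 x y * norm2 x y)) by ring.
    rewrite H2, Hn; ring. }
  assert (Hcs : (a*x+b*y)^2 <= (a^2+b^2)*(x^2+y^2)) by (pose proof (pow2_ge_0 (a*y-b*x)); nra).
  assert (Hle : (a*x+b*y)^2 <= s*s).
  { rewrite Hss. assert (0 <= x^2+y^2) by nra. nra. }
  destruct (Rle_dec (a*x+b*y) s) as [h|h]; [exact h|]. nra.
Qed.

Lemma term_bound a b c q x y z M : 0 < z -> a^2+b^2 <= 2*z^2 -> Rabs q <= M ->
  Rabs (c*q*K (a-x) (b-y)) <= Rabs (c*K a b) * (M * G z x y).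
Proof.
  intros Hz Hab Hq. rewrite K_shift.
  replace (c * q * (K a b * exp (- (x ^ 2 + y ^ 2) / 2 + (a * x + b * y)))) with
    ((c * K a b) * q * exp (- (x ^ 2 + y ^ 2) / 2 + (a * x + b * y))) by ring.
  rewrite (Rabs_mult (c*K a b * q)), (Rabs_mult (c*K a b) q). rewrite (Rabs_right (exp _)) by (left; apply exp_pos).
  rewrite Rmult_assoc. apply Rmult_le_compat_l; [apply Rabs_pos|].
  apply Rmult_le_compat; [apply Rabs_pos| left; apply exp_pos | exact Hq |].
  unfold G. apply exp_le. pose proof (dot_le a b x y z Hab Hz). lra.
Qed.

Lemma qb u v R : u^2+v^2 <= 2*R+4 -> 100 <= R ->
  Rabs 1 <= 3*R /\ Rabs u <= 3*R /\ Rabs v <= 3*R /\ Rabs (u^2-1) <= 3*R /\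
  Rabs (v^2-1) <= 3*R /\ Rabs (u*v) <= 3*R.
Proof.
  intros H1 H2.
  repeat split; unfold Rabs; destruct Rcase_abs; nra.
Qed.

Lemma three_bound z s1 s2 s3 k m r q1 q2 q3 x y :
  0 < z -> fst s1^2 + snd s1^2 <= 2*z^2 -> fst s2^2 + snd s2^2 <= 2*z^2 ->
  fst s3^2 + snd s3^2 <= 2*z^2 ->
  Rabs (k * K (fst s1) (snd s1)) + Rabs (m * K (fst s2) (snd s2)) + Rabs (r * K (fst s3) (snd s3)) <= 2/z ->
  Rabs q1 <= 3*(x^2+y^2) -> Rabs q2 <= 3*(x^2+y^2) -> Rabs q3 <= 3*(x^2+y^2) ->
  Rabs (k*q1*K (fst s1 - x) (snd s1 - y) + m*q2*K (fst s2 - x) (snd s2 - y)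
        + r*q3*K (fst s3 - x) (snd s3 - y)) <= gbound z x y.
Proof.
  intros Hz H1 H2 H3 Hd Q1 Q2 Q3.
  pose proof (term_bound _ _ k q1 x y z _ Hz H1 Q1) as T1.
  pose proof (term_bound _ _ m q2 x y z _ Hz H2 Q2) as T2.
  pose proof (term_bound _ _ r q3 x y z _ Hz H3 Q3) as T3.
  assert (HB : 0 <= 3 * (x^2+y^2) * G z x y).
  { apply Rmult_le_pos; [nra| left; apply exp_pos]. }
  replace (gbound z x y) with (2/z * (3 * (x^2+y^2) * G z x y))
    by (unfold gbound, G; field; lra).
  eapply Rle_trans; [apply Rabs_triang|].
  eapply Rle_trans; [apply Rplus_le_compat_r; apply Rabs_triang|].
  eapply Rle_trans; [|apply Rmult_le_compat_r; [exact HB| exact Hd]].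
  lra.
Qed.


Lemma bounded_wave z s1 s2 s3 k m r x y :
  0 < z -> fst s1^2 + snd s1^2 <= 2*z^2 -> fst s2^2 + snd s2^2 <= 2*z^2 ->
  fst s3^2 + snd s3^2 <= 2*z^2 -> z <= 1 ->
  Rabs (k * K (fst s1) (snd s1)) + Rabs (m * K (fst s2) (snd s2)) + Rabs (r * K (fst s3) (snd s3)) <= 2/z ->
  10 <= norm2 x y ->
  bounded_C2_at (wave s1 s2 s3 k m r) x y (gbound z x y).
Proof.
  intros Hz H1 H2 H3 Hz1 Hd Hn.
  assert (HR : 100 <= x^2+y^2) by (rewrite <- norm2_sq; nra).
  assert (Hu : forall a b, a^2+b^2 <= 2*z^2 -> (a-x)^2 + (b-y)^2 <= 2*(x^2+y^2)+4) by
    (intros a b Hab; assert (z^2 <= 1) by nra; pose proof (pow2_ge_0 (a+x)); pose proof (pow2_ge_0 (b+y)); nra).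
  pose proof (qb _ _ _ (Hu _ _ H1) HR) as [A1 [A2 [A3 [A4 [A5 A6]]]]].
  pose proof (qb _ _ _ (Hu _ _ H2) HR) as [B1 [B2 [B3 [B4 [B5 B6]]]]].
  pose proof (qb _ _ _ (Hu _ _ H3) HR) as [C1 [C2 [C3 [C4 [C5 C6]]]]].
  assert (TB : forall q1 q2 q3, Rabs q1 <= 3*(x^2+y^2) -> Rabs q2 <= 3*(x^2+y^2) -> Rabs q3 <= 3*(x^2+y^2) ->
     Rabs (k*q1*K (fst s1 - x) (snd s1 - y) + m*q2*K (fst s2 - x) (snd s2 - y)
        + r*q3*K (fst s3 - x) (snd s3 - y)) <= gbound z x y)
    by (intros; apply three_bound; assumption).
  assert (EX : forall D : R -> R -> R, (forall a b, dx_is (wave s1 s2 s3 k m r) a b (D a b)) -> D = Wx s1 s2 s3 k m r).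
  { intros D HD. apply functional_extensionality; intro a; apply functional_extensionality; intro b.
    eapply uniqueness_limite; [apply HD| apply d_W_x]. }
  assert (EY : forall D : R -> R -> R, (forall a b, dy_is (wave s1 s2 s3 k m r) a b (D a b)) -> D = Wy s1 s2 s3 k m r).
  { intros D HD. apply functional_extensionality; intro a; apply functional_extensionality; intro b.
    eapply uniqueness_limite; [apply HD| apply d_W_y]. }
  split; [|split; [|split; [|split]]].
  - replace (wave s1 s2 s3 k m r x y) with
      (k*1*K (fst s1 - x) (snd s1 - y) + m*1*K (fst s2 - x) (snd s2 - y)
        + r*1*K (fst s3 - x) (snd s3 - y)) by (unfold wave; ring).
    apply TB; assumption.
  - intros l Hl. rewrite (uniqueness_limite _ _ _ _ Hl (d_W_x s1 s2 s3 k m r x y)).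
    apply TB; assumption.
  - intros l Hl. rewrite (uniqueness_limite _ _ _ _ Hl (d_W_y s1 s2 s3 k m r x y)).
    apply TB; assumption.
  - intros D HD. rewrite (EX D HD). split; intros l Hl.
    + rewrite (uniqueness_limite _ _ _ _ Hl (d_Wx_x s1 s2 s3 k m r x y)). apply TB; assumption.
    + rewrite (uniqueness_limite _ _ _ _ Hl (d_Wx_y s1 s2 s3 k m r x y)). apply TB; assumption.
  - intros D HD. rewrite (EY D HD). split; intros l Hl.
    + rewrite (uniqueness_limite _ _ _ _ Hl (d_Wy_x s1 s2 s3 k m r x y)). apply TB; assumption.
    + rewrite (uniqueness_limite _ _ _ _ Hl (d_Wy_y s1 s2 s3 k m r x y)). apply TB; assumption.
Qed.


Lemma in_tri_perm p a b c : in_triangle p a b c ->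
  in_triangle p a c b /\ in_triangle p b a c /\ in_triangle p b c a /\
  in_triangle p c a b /\ in_triangle p c b a.
Proof.
  intros [l1 [l2 [l3 [H1 [H2 [H3 [H4 [H5 H6]]]]]]]].
  repeat split; unfold in_triangle.
  - exists l1, l3, l2; lra.
  - exists l2, l1, l3; lra.
  - exists l2, l3, l1; lra.
  - exists l3, l1, l2; lra.
  - exists l3, l2, l1; lra.
Qed.

Lemma geo z c h v : 0 < z -> right_tri z c h v -> in_triangle (0,0) c h v ->
  fst c^2 + snd c^2 <= 2*z^2 /\ fst h^2 + snd h^2 <= 2*z^2 /\ fst v^2 + snd v^2 <= 2*z^2.
Proof.
  intros Hz [e1 [e2 [He1 [He2 [Hh Hv]]]]] [l1 [l2 [l3 [H1 [H2 [H3 [H4 [H5 H6]]]]]]]].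
  subst h v. destruct c as [cx cy]. simpl in *.
  assert (cx = (l1+l2+l3)*cx) by (rewrite H4; ring).
  assert (cy = (l1+l2+l3)*cy) by (rewrite H4; ring).
  assert (Ex : cx = - (l2*e1*z)) by lra.
  assert (Ey : cy = - (l3*e2*z)) by lra.
  rewrite Ex, Ey.
  assert (l2 <= 1) by lra. assert (l3 <= 1) by lra.
  assert (Z0 : 0 <= z^2) by nra.
  assert (P1 : l2^2*z^2 <= z^2) by (assert (l2^2 <= 1) by nra; nra).
  assert (P2 : l3^2*z^2 <= z^2) by (assert (l3^2 <= 1) by nra; nra).
  assert (P3 : (1-l2)^2*z^2 <= z^2) by (assert ((1-l2)^2 <= 1) by nra; nra).
  assert (P4 : (1-l3)^2*z^2 <= z^2) by (assert ((1-l3)^2 <= 1) by nra; nra).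
  destruct He1; destruct He2; subst e1 e2; repeat split; nra.
Qed.

Lemma tri_coef z c h v dc dh dv ex ey : 0 < z -> right_tri z c h v -> dc+dh+dv = 0 ->
  dc*fst c + dh*fst h + dv*fst v = ex -> dc*snd c + dh*snd h + dv*snd v = ey ->
  Rabs dc + Rabs dh + Rabs dv <= 2*(Rabs ex + Rabs ey)/z.
Proof.
  intros Hz [e1 [e2 [He1 [He2 [Hh Hv]]]]] Hs Ex Ey.
  subst h v. destruct c as [cx cy]. simpl in *.
  assert ((dc+dh+dv)*cx = 0) by (rewrite Hs; ring).
  assert ((dc+dh+dv)*cy = 0) by (rewrite Hs; ring).
  assert (Fx : dh*e1*z = ex) by lra.
  assert (Fy : dv*e2*z = ey) by lra.
  assert (Ax : Rabs ex = Rabs dh * z).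
  { rewrite <- Fx, !Rabs_mult. rewrite (Rabs_right z) by lra.
    destruct He1; subst e1; [rewrite Rabs_R1 | rewrite (Rabs_left (-1)) by lra]; ring. }
  assert (Ay : Rabs ey = Rabs dv * z).
  { rewrite <- Fy, !Rabs_mult. rewrite (Rabs_right z) by lra.
    destruct He2; subst e2; [rewrite Rabs_R1 | rewrite (Rabs_left (-1)) by lra]; ring. }
  rewrite Ax, Ay.
  replace (2 * (Rabs dh * z + Rabs dv * z) / z) with (2*(Rabs dh + Rabs dv)) by (field; lra).
  replace dc with (- (dh+dv)) by lra. rewrite Rabs_Ropp.
  pose proof (Rabs_triang dh dv). lra.
Qed.


Lemma geo_all z s1 s2 s3 : 0 < z -> nearest_samples z (0,0) s1 s2 s3 ->
  fst s1^2 + snd s1^2 <= 2*z^2 /\ fst s2^2 + snd s2^2 <= 2*z^2 /\ fst s3^2 + snd s3^2 <= 2*z^2.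
Proof.
  intros Hz [Ht Hin].
  destruct (in_tri_perm _ _ _ _ Hin) as [P1 [P2 [P3 [P4 P5]]]].
  destruct Ht as [Ht|[Ht|[Ht|[Ht|[Ht|Ht]]]]].
  - destruct (geo _ _ _ _ Hz Ht Hin); tauto.
  - destruct (geo _ _ _ _ Hz Ht P1); tauto.
  - destruct (geo _ _ _ _ Hz Ht P2); tauto.
  - destruct (geo _ _ _ _ Hz Ht P3); tauto.
  - destruct (geo _ _ _ _ Hz Ht P4); tauto.
  - destruct (geo _ _ _ _ Hz Ht P5); tauto.
Qed.

Lemma coef z s1 s2 s3 k m r ex ey : 0 < z -> nearest_samples z (0,0) s1 s2 s3 ->
  wave_conds (wave s1 s2 s3 k m r) ex ey -> Rabs ex + Rabs ey = 1 ->
  Rabs (k * K (fst s1) (snd s1)) + Rabs (m * K (fst s2) (snd s2)) + Rabs (r * K (fst s3) (snd s3)) <= 2/z.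
Proof.
  intros Hz [Ht Hin] [W0 [Wdx Wdy]] He.
  set (d1 := k * K (fst s1) (snd s1)). set (d2 := m * K (fst s2) (snd s2)).
  set (d3 := r * K (fst s3) (snd s3)).
  assert (S0 : d1+d2+d3 = 0).
  { unfold wave in W0. rewrite !Rminus_0_r in W0. exact W0. }
  assert (Sx : d1*fst s1 + d2*fst s2 + d3*fst s3 = ex).
  { rewrite (uniqueness_limite _ _ _ _ Wdx (d_W_x s1 s2 s3 k m r 0 0)).
    unfold Wx. rewrite !Rminus_0_r. unfold d1, d2, d3. ring. }
  assert (Sy : d1*snd s1 + d2*snd s2 + d3*snd s3 = ey).
  { rewrite (uniqueness_limite _ _ _ _ Wdy (d_W_y s1 s2 s3 k m r 0 0)).
    unfold Wy. rewrite !Rminus_0_r. unfold d1, d2, d3. ring. }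
  replace (2/z) with (2*(Rabs ex + Rabs ey)/z) by (rewrite He; field; lra).
  destruct Ht as [Ht|[Ht|[Ht|[Ht|[Ht|Ht]]]]].
  - apply (tri_coef z s1 s2 s3 d1 d2 d3); auto.
  - enough (Rabs d1 + Rabs d3 + Rabs d2 <= 2*(Rabs ex + Rabs ey)/z) by lra.
    apply (tri_coef z s1 s3 s2 d1 d3 d2); auto; lra.
  - enough (Rabs d2 + Rabs d1 + Rabs d3 <= 2*(Rabs ex + Rabs ey)/z) by lra.
    apply (tri_coef z s2 s1 s3 d2 d1 d3); auto; lra.
  - enough (Rabs d2 + Rabs d3 + Rabs d1 <= 2*(Rabs ex + Rabs ey)/z) by lra.
    apply (tri_coef z s2 s3 s1 d2 d3 d1); auto; lra.
  - enough (Rabs d3 + Rabs d1 + Rabs d2 <= 2*(Rabs ex + Rabs ey)/z) by lra.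
    apply (tri_coef z s3 s1 s2 d3 d1 d2); auto; lra.
  - enough (Rabs d3 + Rabs d2 + Rabs d1 <= 2*(Rabs ex + Rabs ey)/z) by lra.
    apply (tri_coef z s3 s2 s1 d3 d2 d1); auto; lra.
Qed.

Lemma exp_n n a : exp (INR n * a) = exp a ^ n.
Proof.
  induction n as [|n IH].
  - simpl. rewrite Rmult_0_l, exp_0. reflexivity.
  - rewrite S_INR, Rmult_plus_distr_r, Rmult_1_l, exp_plus, IH. simpl. ring.
Qed.

Lemma exp35 : 3 * 10^13 < exp 35.
Proof.
  assert (E1 : (9/8)^8 <= exp 1).
  { assert (exp 1 = exp (1/8) ^ 8) by (rewrite <- exp_n; f_equal; simpl; lra).
    rewrite H.
    apply pow_incr. pose proof (exp_ineq1_le (1/8)). lra. }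
  assert (E2 : 256/100 <= (9/8)^8) by (simpl; lra).
  assert (E3 : (256/100)^35 <= exp 35).
  { assert (exp 35 = exp 1 ^ 35) by (rewrite <- exp_n; f_equal; simpl; lra).
    rewrite H.
    apply pow_incr. lra. }
  assert (E4 : 3*10^13 < (256/100)^35) by (simpl; lra).
  lra.
Qed.

Lemma g_small z x y : 1/100 <= z <= 1 -> 10 <= norm2 x y -> gbound z x y < 2/1000000000.
Proof.
  intros [Hz1 Hz2] Hn.
  set (n := norm2 x y) in *.
  assert (HR : x^2+y^2 = n*n) by (unfold n; rewrite norm2_sq; reflexivity).
  unfold gbound. fold n. rewrite HR.
  pose proof (sqrt_sqrt 2 ltac:(lra)) as S2. pose proof (sqrt_pos 2) as S0.
  assert (S15 : sqrt 2 <= 3/2) by nra.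
  set (s := n - 10).
  assert (Hexp : exp (- (n*n)/2 + sqrt 2 * z * n) <= exp (-35 - 17/2 * s)).
  { apply exp_le. unfold s. assert (sqrt 2 * z <= 3/2) by nra. nra. }
  assert (Hn1 : n <= 10 * exp (s/10)) by (pose proof (exp_ineq1_le (s/10)); unfold s in *; lra).
  assert (Hn2 : n*n <= 100 * exp (s/5)).
  { replace (s/5) with (s/10 + s/10) by field. rewrite exp_plus.
    assert (0 <= n) by lra. nra. }
  assert (Hiz : 6 * (n*n) / z <= 600 * (n*n)).
  { unfold Rdiv. assert (/ z <= 100).
    { replace 100 with (/ (1/100)) by field. apply Rinv_le_contravar; lra. }
    assert (0 <= n*n) by nra. nra. }
  assert (Hs : 0 <= s) by (unfold s; lra).
  assert (Hf : exp (s/5) * exp (-35 - 17/2*s) <= exp (-35)).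
  { rewrite <- exp_plus. apply exp_le. lra. }
  assert (He35 : exp (-35) < 2/1000000000 / 60000).
  { replace (-35) with (- (35)) by lra. rewrite exp_Ropp. pose proof exp35. apply Rmult_lt_reg_l with (exp 35); [apply exp_pos|].
    rewrite Rinv_r by (apply Rgt_not_eq, exp_pos). lra. }
  pose proof (exp_pos (- (n*n)/2 + sqrt 2 * z * n)).
  pose proof (exp_pos (s/5)). pose proof (exp_pos (-35 - 17/2*s)).
  assert (0 <= 6 * (n*n) / z) by (unfold Rdiv; apply Rmult_le_pos; [nra| left; apply Rinv_0_lt_compat; lra]).
  apply Rle_lt_trans with (600 * (100 * exp (s/5)) * exp (-35 - 17/2 * s)).
  { apply Rmult_le_compat; try lra. }
  nra.
Qed.


Theorem lemmaC6 (z : R) (s1 s2 s3 : R * R) (k1 m1 r1 k2 m2 r2 : R) :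
  0 < z <= 1 ->
  nearest_samples z (0, 0) s1 s2 s3 ->
  wave_conds (wave s1 s2 s3 k1 m1 r1) 1 0 ->
  wave_conds (wave s1 s2 s3 k2 m2 r2) 0 1 ->
  (forall x y : R, 10 <= norm2 x y ->
     bounded_C2_at (wave s1 s2 s3 k1 m1 r1) x y (gbound z x y) /\
     bounded_C2_at (wave s1 s2 s3 k2 m2 r2) x y (gbound z x y)) /\
  (1 / 100 <= z ->
     forall x y : R, 10 <= norm2 x y -> gbound z x y < 2 / 1000000000).
Proof.
  intros [Hz Hz1] Hns Hc1 Hc2.
  destruct (geo_all _ _ _ _ Hz Hns) as [G1 [G2 G3]].
  split.
  - intros x y Hn. split; apply bounded_wave; auto.
    + eapply coef; eauto. rewrite Rabs_R1, Rabs_R0; ring.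
    + eapply coef; eauto. rewrite Rabs_R1, Rabs_R0; ring.
  - intros Hz2 x y Hn. apply g_small; auto.
Qed.
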